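(* Let $c$ be the pullback closure operator on $\mathsf{Qnd}$ associated with the reflection $\pi_0\dashv U$. Then: (1) $c_X(\{x\})=[x]_X$ for every quandle $X$ and $x\in X$; (2) for any family $(S_i)_{i\in I}$ of subquandles of $X$, $c_X(\bigvee_{i\in I}S_i)=\bigvee_{i\in I}c_X(S_i)$, where $\bigvee$ denotes the smallest subquandle containing the given ones; (3) for quandles $X_1,\dots,X_n$ and subquandles $M_i\subseteq X_i$, $c_{X}(\prod_{i=1}^n M_i)=\prod_{i=1}^n c_{X_i}(M_i)$ where $X=\prod_{i=1}^n X_i$; (4) for any surjective homomorphism $f\colon X\to Y$ and subquandle $M\subseteq X$, $f(c_X(M))=c_Y(f(M))$.
   Context: A quandle is a set $X$ with two binary operations $\lhd,\lhd^{-1}$ satisfying, for all $x,y,z\in X$: $x\lhd x = x = x\lhd^{-1}x$; $(x\lhd y)\lhd^{-1}y = x = (x\lhd^{-1}y)\lhd y$; $(x\lhd y)\lhd z = (x\lhd z)\lhd(y\lhd z)$ and $(x\lhd^{-1}y)\lhd^{-1}z = (x\lhd^{-1}z)\lhd^{-1}(y\lhd^{-1}z)$. Homomorphisms preserve both operations; $\mathsf{Qnd}$ is the resulting category. A quandle is trivial if $x\lhd y = x = x\lhd^{-1}y$ for all $x,y$; these form the full subcategory $\mathsf{Qnd}^*$, with inclusion $U$. For $x\in X$, the orbit $[x]_X$ is the set of all elements $x\lhd^{\alpha_1}x_1\cdots\lhd^{\alpha_n}x_n$ ($n\ge 0$, $x_i\in X$, $\lhd^{\alpha_i}\in\{\lhd,\lhd^{-1}\}$,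 bracketed from the left). The functor $\pi_0\colon\mathsf{Qnd}\to\mathsf{Qnd}^*$ sends $X$ to the trivial quandle of its orbits and is left adjoint to $U$, with unit $\eta_X\colon X\to U\pi_0(X)$, $x\mapsto[x]_X$. The pullback closure operator $c$: for a subquandle $M\subseteq X$ with inclusion $m$, $c_X(M)$ is the inverse image under $\eta_X$ of the image of $U\pi_0(m)\colon U\pi_0(M)\to U\pi_0(X)$. *)

(* Defs.v *)
From Stdlib Require Import FunctionalExtensionality.
From mathcomp Require Import ssreflect ssrfun ssrbool eqtype ssrnat fintype.

Set Implicit Arguments.
Unset Strict Implicit.
Unset Printing Implicit Defensive.

Record quandle := Quandle {
  qcar :> Type;
  qop  : qcar -> qcar -> qcar;
  qinv : qcar -> qcar -> qcar;
  qop_idem  : forall x, qop x x = x;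
  qinv_idem : forall x, qinv x x = x;
  qop_invK  : forall x y, qinv (qop x y) y = x;
  qinv_opK  : forall x y, qop (qinv x y) y = x;
  qop_dist  : forall x y z, qop (qop x y) z = qop (qop x z) (qop y z);
  qinv_dist : forall x y z, qinv (qinv x y) z = qinv (qinv x z) (qinv y z)
}.

Arguments qop {q}.
Arguments qinv {q}.

Definition qhom (X Y : quandle) (f : X -> Y) : Prop :=
  (forall x y, f (qop x y) = qop (f x) (f y)) /\
  (forall x y, f (qinv x y) = qinv (f x) (f y)).

Definition subquandle (X : quandle) (M : X -> Prop) : Prop :=
  forall x y, M x -> M y -> M (qop x y) /\ M (qinv x y).

Inductive orbit (X : quandle) (x : X) : X -> Prop :=
  | orbit_refl : orbit x x
  | orbit_op   : forall y z, orbit x y -> orbit x (qop y z)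
  | orbit_inv  : forall y z, orbit x y -> orbit x (qinv y z).

(** Unit of the reflection pi_0 -| U: x |-> [x]_X (orbits represented as subsets of X). *)
Definition eta (X : quandle) (x : X) : X -> Prop := orbit x.

(** Pullback closure: c_X(M) = eta_X^{-1}( image of U pi_0(m) ).  The map
    U pi_0(m) : U pi_0(M) -> U pi_0(X) sends [m]_M to [m]_X, so its image is
    { [m]_X | m in M }. *)
Definition closure (X : quandle) (M : X -> Prop) : X -> Prop :=
  fun x => exists m, M m /\ eta x = eta m.

Definition qjoin (X : quandle) (I : Type) (S : I -> X -> Prop) : X -> Prop :=
  fun x => forall N : X -> Prop, subquandle N ->
             (forall i y, S i y -> N y) -> N x.

Section Product.
Variables (n : nat) (X : 'I_n -> quandle).

Definition prod_car := forall i : 'I_n, X i.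
Definition prod_op (x y : prod_car) : prod_car := fun i => qop (x i) (y i).
Definition prod_inv (x y : prod_car) : prod_car := fun i => qinv (x i) (y i).

Lemma prod_op_idem x : prod_op x x = x.
Proof. apply: functional_extensionality_dep => i; exact: qop_idem. Qed.
Lemma prod_inv_idem x : prod_inv x x = x.
Proof. apply: functional_extensionality_dep => i; exact: qinv_idem. Qed.
Lemma prod_op_invK x y : prod_inv (prod_op x y) y = x.
Proof. apply: functional_extensionality_dep => i; exact: qop_invK. Qed.
Lemma prod_inv_opK x y : prod_op (prod_inv x y) y = x.
Proof. apply: functional_extensionality_dep => i; exact: qinv_opK. Qed.
Lemma prod_op_dist x y z :
  prod_op (prod_op x y) z = prod_op (prod_op x z) (prod_op y z).
Proof. apply: functional_extensionality_dep => i; exact: qop_dist. Qed.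
Lemma prod_inv_dist x y z :
  prod_inv (prod_inv x y) z = prod_inv (prod_inv x z) (prod_inv y z).
Proof. apply: functional_extensionality_dep => i; exact: qinv_dist. Qed.

Definition prodQ : quandle :=
  @Quandle prod_car prod_op prod_inv prod_op_idem prod_inv_idem
    prod_op_invK prod_inv_opK prod_op_dist prod_inv_dist.

Definition prodS (M : forall i : 'I_n, X i -> Prop) : prodQ -> Prop :=
  fun x => forall i, M i (x i).
End Product.

Definition qimage (X Y : quandle) (f : X -> Y) (M : X -> Prop) : Y -> Prop :=
  fun y => exists x, M x /\ f x = y.

(* Main.v *)
Require Import Defs.
From Stdlib Require Import FunctionalExtensionality.
From Stdlib Require Import PropExtensionality ClassicalEpsilon.
From mathcomp Require Import ssreflect ssrfun ssrbool eqtype ssrnat fintype.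
Set Implicit Arguments.
Unset Strict Implicit.

Section Orb.
Variable X : quandle.

Lemma orbit_trans (a b c : X) : orbit a b -> orbit b c -> orbit a c.
Proof. move=> Hab; elim=> [|y z _ IH|y z _ IH]; [exact Hab|exact: orbit_op|exact: orbit_inv]. Qed.

Lemma orbit_sym (a b : X) : orbit a b -> orbit b a.
Proof.
elim=> [|y z _ IH|y z _ IH]; first exact: orbit_refl.
- apply: orbit_trans IH. rewrite -{2}(qop_invK y z). apply: orbit_inv; exact: orbit_refl.
- apply: orbit_trans IH. rewrite -{2}(qinv_opK y z). apply: orbit_op; exact: orbit_refl.
Qed.

Lemma eta_eq (x m : X) : eta x = eta m <-> orbit m x.
Proof.
split.
- move=> E. have : eta x x by exact: orbit_refl. by rewrite E.
- move=> H; apply: functional_extensionality => z; apply: propositional_extensionality.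
  rewrite /eta; split => Hz.
  + move: Hz; rewrite /eta => Hz; exact: (orbit_trans H Hz).
  + move: Hz; rewrite /eta => Hz; exact: (orbit_trans (orbit_sym H) Hz).
Qed.

Lemma closureE (M : X -> Prop) y : closure M y <-> exists m, M m /\ orbit m y.
Proof.
split; move=> [m [Hm H]]; exists m; split => //; by apply/eta_eq.
Qed.

Lemma closure_sub (M : X -> Prop) : subquandle (closure M).
Proof.
move=> x y /closureE [m [Hm H]] _; split; apply/closureE; exists m; split => //.
exact: orbit_op. exact: orbit_inv.
Qed.
End Orb.

Section Prod.
Variables (n : nat) (X : 'I_n -> quandle).

Definition upd (p : prod_car X) (i : 'I_n) (c : X i) : prod_car X :=
  fun j => match i =P j with ReflectT e => eq_rect i X c j e | ReflectF _ => p j end.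
Arguments upd p i c _ : clear implicits.

Lemma upd_same p i c : upd p i c i = c.
Proof. rewrite /upd; case: eqP => // e. by rewrite (eq_irrelevance e erefl). Qed.

Lemma upd_other p i c j : i != j -> upd p i c j = p j.
Proof. rewrite /upd; case: eqP => // e; by rewrite e eqxx. Qed.

Lemma upd_orbit i (a b : X i) : orbit a b -> forall p : prodQ X, p i = a ->
  orbit p (upd p i b : prodQ X).
Proof.
move=> H p Hp; elim: H => [|y z _ IH|y z _ IH].
- have -> : upd p i a = p.
    apply: functional_extensionality_dep => j; case: (eqVneq i j) => [<-|ne].
    by rewrite upd_same. by rewrite upd_other.
  exact: orbit_refl.
- have -> : upd p i (qop y z) = qop (upd p i y : prodQ X) (upd p i z : prodQ X).
    apply: functional_extensionality_dep => j; rewrite /= /prod_op.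
    case: (eqVneq i j) => [<-|ne]; first by rewrite !upd_same.
    by rewrite !upd_other // qop_idem.
  exact: orbit_op.
- have -> : upd p i (qinv y z) = qinv (upd p i y : prodQ X) (upd p i z : prodQ X).
    apply: functional_extensionality_dep => j; rewrite /= /prod_inv.
    case: (eqVneq i j) => [<-|ne]; first by rewrite !upd_same.
    by rewrite !upd_other // qinv_idem.
  exact: orbit_inv.
Qed.

Lemma orbit_coord (p q : prodQ X) i : orbit p q -> orbit (p i) (q i).
Proof. elim=> [|y z _ IH|y z _ IH]; [exact: orbit_refl|exact: orbit_op|exact: orbit_inv]. Qed.

Lemma orbit_prod (m y : prodQ X) : (forall i, orbit (m i) (y i)) -> orbit m y.
Proof.
move=> H.
pose q k : prodQ X := fun j => if (j < k)%N then y j else m j.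
have Hk : forall k, orbit m (q k).
  elim=> [|k IH].
  - have -> : q 0 = m by apply: functional_extensionality_dep.
    exact: orbit_refl.
  - case: (ltnP k n) => hk.
    + pose i := Ordinal hk.
      have -> : q k.+1 = upd (q k) i (y i).
        apply: functional_extensionality_dep => j; rewrite /q.
        case: (eqVneq i j) => [<-|ne]; first by rewrite upd_same /= ltnSn.
        rewrite upd_other // ltnS leq_eqVlt.
        have -> : (nat_of_ord j == k) = false.
          apply/negbTE; apply: contra ne => /eqP e; apply/eqP/val_inj => /=. by [].
        by [].
      apply: orbit_trans IH _; apply: (upd_orbit (H i)).
      by rewrite /q /= ltnn.
    + have -> : q k.+1 = q k.
        apply: functional_extensionality_dep => j; rewrite /q.
        have h1 : (j < k)%N by apply: leq_trans (ltn_ord j) hk.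
        by rewrite h1 ltnS (ltnW h1).
      exact: IH.
have -> : y = q n.
  apply: functional_extensionality_dep => j; by rewrite /q ltn_ord.
exact: Hk.
Qed.
End Prod.

Theorem mainTheorem3 :
  (* (1) c_X({x}) = [x]_X *)
  (forall (X : quandle) (x : X),
     forall y : X, closure (fun z => z = x) y <-> orbit x y)
  /\
  (* (2) c_X commutes with joins of families of subquandles *)
  (forall (X : quandle) (I : Type) (S : I -> X -> Prop),
     (forall i, subquandle (S i)) ->
     forall y : X, closure (qjoin S) y <-> qjoin (fun i => closure (S i)) y)
  /\
  (* (3) c_X commutes with finite products *)
  (forall (n : nat) (X : 'I_n -> quandle) (M : forall i : 'I_n, X i -> Prop),
     (forall i, subquandle (M i)) ->
     forall y : prodQ X,
       closure (prodS M) y <-> prodS (fun i => closure (M i)) y)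
  /\
  (* (4) surjective homomorphisms preserve closures: f(c_X(M)) = c_Y(f(M)) *)
  (forall (X Y : quandle) (f : X -> Y),
     qhom f -> (forall y : Y, exists x : X, f x = y) ->
     forall M : X -> Prop, subquandle M ->
     forall y : Y, qimage f (closure M) y <-> closure (qimage f M) y).
Proof.
split; [|split; [|split]].
- move=> X x y; rewrite closureE; split.
  + by move=> [m [-> H]].
  + move=> H; by exists x.
- move=> X I S _ y; split.
  + move=> /closureE [m [Hm Hy]] N HN Hsub.
    pose N' := fun z : X => exists i m', S i m' /\ orbit m' z.
    have HN' : subquandle N'.
      move=> a b [i [m' [H1 H2]]] _; split; exists i, m'; split => //.
      exact: orbit_op. exact: orbit_inv.
    have [i [m' [H1 H2]]] : N' m.
      apply: Hm => // i z Hz; exists i, z; split => //; exact: orbit_refl.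
    apply: (Hsub i); apply/closureE; exists m'; split => //; exact: orbit_trans H2 Hy.
  + move=> H; apply: H; first exact: closure_sub.
    move=> i z /closureE [m [Hm Hz]]; apply/closureE; exists m; split => //.
    by move=> N _ HS; apply: HS Hm.
- move=> n X M _ y; split.
  + move=> /closureE [m [Hm Hy]] i; apply/closureE; exists (m i); split => //.
    exact: orbit_coord.
  + move=> H.
    have H' : forall i, exists mi, M i mi /\ orbit mi (y i).
      by move=> i; apply/closureE.
    pose m : prodQ X := fun i => proj1_sig (constructive_indefinite_description _ (H' i)).
    apply/closureE; exists m; split.
    * move=> i; rewrite /m; case: constructive_indefinite_description => ? [] //.
    * apply: orbit_prod => i; rewrite /m; case: constructive_indefinite_description => ? [] //.
- move=> X Y f [fop finv] fsurj M _ y; split.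
  + move=> [x [/closureE [m [Hm Hx]] <-]]; apply/closureE; exists (f m); split.
      by exists m.
    elim: Hx => [|a z _ IH|a z _ IH]; [exact: orbit_refl|rewrite fop|rewrite finv].
    exact: orbit_op. exact: orbit_inv.
  + move=> /closureE [_ [[m [Hm <-]] Hy]].
    suff [x [Hx <-]] : exists x, orbit m x /\ f x = y.
      exists x; split => //; apply/closureE; by exists m.
    elim: Hy => [|a z _ [x [Hx <-]]|a z _ [x [Hx <-]]].
    * exists m; split => //; exact: orbit_refl.
    * have [w <-] := fsurj z; exists (qop x w); split; [exact: orbit_op|by rewrite fop].
    * have [w <-] := fsurj z; exists (qinv x w); split; [exact: orbit_inv|by rewrite finv].
Qed.
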